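(* Let $T$ be a spherically homogeneous rooted tree, $G\le\mathrm{Aut}~T$ a branch group, and $H\le G$ a subgroup with finitely many conjugates in $G$. Then $\mathrm{Supp}(H)$ is a clopen subset of $\partial T$.
   Context: A spherically homogeneous rooted tree is a rooted tree in which all vertices at the same distance from the root have the same degree; $\mathcal{L}_n$ is the set of vertices at distance $n$ from the root. $\partial T$ is the set of infinite paths from the root, topologized by the cone sets $C_v$ (paths through $v$). For $H\le\mathrm{Aut}~T$, $\mathrm{Supp}(H)=\{\gamma\in\partial T\mid \gamma^h\ne\gamma \text{ for some } h\in H\}$. For $G\le\mathrm{Aut}~T$, $\mathrm{rist}_G(v)$ is the set of elements of $G$ fixing $v$ whose support lies in $C_v$, and $\mathrm{Rist}_G(n)=\prod_{v\in\mathcal{L}_n}\mathrm{rist}_G(v)$. $G$ is a branch group if it acts transitively on every level $\mathcal{L}_n$ and $\mathrm{Rist}_G(n)$ has finite index in $G$ for all $n\ge1$. *)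

(* Defs.v *)
From mathcomp Require Import all_boot.
Set Implicit Arguments. Unset Strict Implicit. Unset Printing Implicit Defensive.

(* The spherically homogeneous rooted tree T_m with branching sequence m:
   every vertex at level n has exactly m n children.  Vertices are the finite
   words v = [:: i_0; ...; i_{n-1}] with i_k < m k; the root is [::];
   the children of v are rcons v i, i < m (size v). *)
Section Tree.
Variable m : nat -> nat.

Definition vert (v : seq nat) : Prop := forall i, i < size v -> nth 0 v i < m i.

Definition lvl (n : nat) (v : seq nat) : Prop := size v = n /\ vert v.

Fixpoint levelseq (n : nat) : seq (seq nat) :=
  if n is n'.+1 then
    flatten [seq [seq rcons v i | i <- iota 0 (m n')] | v <- levelseq n']
  else [:: [::]].

Definition adj (u v : seq nat) : Prop :=
  vert u /\ vert v /\ exists i, v = rcons u i \/ u = rcons v i.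

(* Aut T: graph automorphisms of the rooted tree fixing the root, extended
   by the identity outside the vertex set (so equality is Leibniz). *)
Definition is_aut (a : seq nat -> seq nat) : Prop :=
  [/\ forall v, vert v -> vert (a v),
      forall v, ~ vert v -> a v = v,
      bijective a,
      a [::] = [::] &
      forall u v, vert u -> vert v -> (adj u v <-> adj (a u) (a v))].

(* boundary dT : infinite paths from the root, i.e. sequences gamma with
   gamma k < m k; the path passes through the vertices pref gamma n. *)
Definition bpath (g : nat -> nat) : Prop := forall k, g k < m k.
Definition pref (g : nat -> nat) (n : nat) : seq nat := mkseq g n.

Definition cone (v : seq nat) (g : nat -> nat) : Prop :=
  bpath g /\ pref g (size v) = v.

Definition bact (a : seq nat -> seq nat) (g : nat -> nat) : nat -> nat :=
  fun k => nth 0 (a (pref g k.+1)) k.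

Definition Supp (H : (seq nat -> seq nat) -> Prop) (g : nat -> nat) : Prop :=
  bpath g /\ exists h, H h /\ bact h g <> g.

(* topology on dT generated by the cone sets: S (subset of dT) is open iff
   it is a union of cones, i.e. each point of S has a cone neighbourhood in S *)
Definition bopen (S : (nat -> nat) -> Prop) : Prop :=
  forall g, S g -> exists n, forall d, cone (pref g n) d -> S d.
Definition bclosed (S : (nat -> nat) -> Prop) : Prop :=
  bopen (fun g => bpath g /\ ~ S g).
Definition bclopen (S : (nat -> nat) -> Prop) : Prop :=
  (forall g, S g -> bpath g) /\ bopen S /\ bclosed S.

Definition is_group (G : (seq nat -> seq nat) -> Prop) : Prop :=
  [/\ forall g, G g -> is_aut g,
      G id,
      forall g h, G g -> G h -> G (g \o h) &
      forall g h, G g -> cancel g h -> cancel h g -> G h].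

Definition subgroup (H G : (seq nat -> seq nat) -> Prop) : Prop :=
  is_group H /\ forall h, H h -> G h.

Definition conjg_set (g : seq nat -> seq nat) (H : (seq nat -> seq nat) -> Prop)
  : (seq nat -> seq nat) -> Prop :=
  fun x => exists h gi, [/\ H h, cancel g gi, cancel gi g & x = g \o h \o gi].

Definition finitely_many_conjugates (H G : (seq nat -> seq nat) -> Prop) : Prop :=
  exists (n : nat) (F : nat -> (seq nat -> seq nat) -> Prop),
    forall g, G g -> exists2 i, i < n & conjg_set g H = F i.

Definition finite_index (K G : (seq nat -> seq nat) -> Prop) : Prop :=
  exists (n : nat) (r : nat -> seq nat -> seq nat),
    forall g, G g -> exists2 i, i < n & exists2 k, K k & g = r i \o k.

Definition rist (G : (seq nat -> seq nat) -> Prop) (v : seq nat)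
  (g : seq nat -> seq nat) : Prop :=
  [/\ G g, g v = v & forall d, Supp (eq g) d -> cone v d].

Definition Rist (G : (seq nat -> seq nat) -> Prop) (n : nat)
  (g : seq nat -> seq nat) : Prop :=
  exists f : seq nat -> seq nat -> seq nat,
    (forall v, v \in levelseq n -> rist G v (f v)) /\
    g = foldr (fun a b => a \o b) id (map f (levelseq n)).

Definition level_transitive (G : (seq nat -> seq nat) -> Prop) : Prop :=
  forall n u v, lvl n u -> lvl n v -> exists2 g, G g & g u = v.

Definition branch_group (G : (seq nat -> seq nat) -> Prop) : Prop :=
  [/\ is_group G, level_transitive G &
      forall n, 1 <= n -> finite_index (Rist G n) G].

End Tree.

(* Main.v *)
Require Import Defs.
From mathcomp Require Import all_boot.
From Stdlib Require Import Classical FunctionalExtensionality Lia.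
From mathcomp Require Import zify.
Set Implicit Arguments. Unset Strict Implicit. Unset Printing Implicit Defensive.

Section Aux.
Variable m : nat -> nat.

Lemma vert_rcons p j : vert m (rcons p j) -> vert m p.
Proof.
move=> hv i hi; move: (hv i); rewrite size_rcons nth_rcons hi; apply.
exact: ltnW.
Qed.

Lemma aut_struct a : is_aut m a -> forall n v, size v = n -> vert m v ->
  size (a v) = n /\ forall p j, v = rcons p j -> exists j', a v = rcons (a p) j'.
Proof.
case=> avert aout abij aroot aadj.
elim=> [|n IH] v.
  move/size0nil->; rewrite aroot; split=> // p j /(congr1 size).
  by rewrite size_rcons.
case/lastP: v => [//|p j]; rewrite size_rcons => -[sp] vv.
have vp := vert_rcons vv.
have [sap stp] := IH p sp vp.
have : adj m p (rcons p j) by split=> //; split=> //; exists j; left.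
move/(aadj _ _ vp vv) => [_ [_ [i [e|e]]]].
- split; first by rewrite e size_rcons sap.
  move=> p' j' /rcons_inj [<- _]; by exists i.
- exfalso. move: sp vp sap stp e vv.
  case/lastP: p => [|q j0] sp vp sap stp e vv.
  + move: e; rewrite aroot => /(congr1 size); by rewrite size_rcons.
  + have [j1 e1] := stp q j0 erefl. rewrite e1 in e. case/rcons_inj: e => e _.
    move: e => /(bij_inj abij)/(congr1 size); rewrite !size_rcons. lia.
Qed.

Lemma aut_take a : is_aut m a -> forall v L, vert m v -> a (take L v) = take L (a v).
Proof.
move=> au; elim/last_ind=> [|p j IH] L vv.
  by case: au => _ _ _ ar _; rewrite /= ar.
have [sv st] := aut_struct au (erefl _) vv.
have [j' e] := st p j erefl.
have vp := vert_rcons vv.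
have [sp _] := aut_struct au (erefl _) vp.
case: (leqP (size (rcons p j)) L) => hL.
  by rewrite !take_oversize ?sv.
move: hL; rewrite size_rcons ltnS => hL.
rewrite e -!cats1 !takel_cat ?sp //; exact: IH.
Qed.

Lemma size_pref g n : size (pref g n) = n.
Proof. by rewrite /pref size_mkseq. Qed.

Lemma nth_pref g n k : k < n -> nth 0 (pref g n) k = g k.
Proof. by move=> h; rewrite /pref nth_mkseq. Qed.

Lemma vert_pref g n : bpath m g -> vert m (pref g n).
Proof. by move=> bg i; rewrite size_pref => hi; rewrite nth_pref. Qed.

Lemma take_pref g L L' : L <= L' -> take L (pref g L') = pref g L.
Proof. by move=> h; rewrite /pref /mkseq -map_take take_iota (minn_idPl h). Qed.

Lemma pref_bact a g n : is_aut m a -> bpath m g -> pref (bact a g) n = a (pref g n).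
Proof.
move=> au bg.
have [sa _] := aut_struct au (size_pref g n) (@vert_pref g n bg).
apply: (@eq_from_nth _ 0); first by rewrite size_pref sa.
move=> k; rewrite size_pref => hk. rewrite nth_pref // /bact.
by rewrite -(take_pref g hk) (aut_take au _ (@vert_pref g _ bg)) nth_take.
Qed.

Lemma bpath_bact a g : is_aut m a -> bpath m g -> bpath m (bact a g).
Proof.
move=> au bg k; rewrite /bact.
have vv := @vert_pref g k.+1 bg.
have [sa _] := aut_struct au (size_pref g k.+1) vv.
case: au => avert _ _ _ _.
by apply: (avert _ vv); rewrite sa.
Qed.

Lemma pref_inj g d : (forall n, pref g n = pref d n) -> g = d.
Proof.
move=> h; apply: functional_extensionality => k.
by have := congr1 (nth 0 ^~ k) (h k.+1); rewrite /= !nth_pref.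
Qed.
End Aux.

Lemma php k (P : nat -> nat -> Prop) : (forall j, j <= k -> exists2 i, i < k & P j i) ->
  exists j1 j2 i, [/\ j1 < j2 <= k, P j1 i & P j2 i].
Proof.
elim: k P => [|k IH] P hP.
  by have [i] := hP 0 (leqnn 0).
have [i0 hi0 P0] := hP k.+1 (leqnn _).
case: (classic (exists j, j <= k /\ P j i0)) => [[j [hj Pj]]|no].
  by exists j, k.+1, i0; split=> //; rewrite ltnS hj leqnn.
have := IH (fun j i => P j (if i < i0 then i else i.+1)).
case.
  move=> j hj; have [i hi Pi] := hP j (leqW hj).
  have ne : i <> i0 by move=> e; apply: no; exists j; rewrite -e.
  case: (ltnP i i0) => hii0.
    exists i; last by rewrite hii0.
    apply: (leq_trans hii0); by rewrite -ltnS.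
  exists i.-1.
    move: hi hii0 ne; case: i {Pi} => [|i] /=; lia.
  move: hii0 ne Pi; case: i {hi} => [|i] /= h1 h2; first lia.
  have -> : (i < i0) = false by apply/negbTE; rewrite -leqNgt; lia.
  done.
move=> j1 [j2 [i [/andP [h1 h2] p1 p2]]].
by exists j1, j2, (if i < i0 then i else i.+1); split=> //; rewrite h1 /= (leq_trans h2).
Qed.

Section Main.
Variables (m : nat -> nat) (G H : (seq nat -> seq nat) -> Prop).
Hypothesis gG : is_group m G.
Hypothesis sHG : subgroup m H G.

Definition E (a b : seq nat) :=
  exists x y, [/\ G x, G y, x a = y b & conjg_set x H = conjg_set y H].

Lemma E_sym a b : E a b -> E b a.
Proof. by case=> x [y [gx gy e c]]; exists y, x; split. Qed.

Lemma G_aut x : G x -> is_aut m x.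
Proof. by case: gG => h _ _ _; apply: h. Qed.

Lemma H_G h : H h -> G h.
Proof. by case: sHG => _; apply. Qed.

Lemma E_take f1 f2 L L' : bpath m f1 -> bpath m f2 -> L <= L' ->
  E (pref f1 L') (pref f2 L') -> E (pref f1 L) (pref f2 L).
Proof.
move=> b1 b2 hL [x [y [gx gy e c]]]; exists x, y; split=> //.
rewrite -(take_pref f1 hL) -(take_pref f2 hL).
rewrite (aut_take (G_aut gx) _ (vert_pref (n:=L') b1)).
by rewrite (aut_take (G_aut gy) _ (vert_pref (n:=L') b2)) e.
Qed.

Lemma transfer g d L : bpath m g -> bpath m d -> E (pref g L) (pref d L) ->
  (forall e, cone m (pref d L) e -> Supp m H e) -> Supp m H g.
Proof.
move=> bg bd [x [y [gx gy e c]]] hS.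
have ax := G_aut gx; have ay := G_aut gy.
have [yi yyi yiy] : bijective y by case: ay.
have gyi : G yi by case: gG => _ _ _ inv; exact: inv gy yyi yiy.
have ayi := G_aut gyi.
set eps := bact yi (bact x g).
have bxg : bpath m (bact x g) by apply: bpath_bact.
have beps : bpath m eps by apply: bpath_bact.
have peps n : pref eps n = yi (x (pref g n)).
  by rewrite /eps (pref_bact n ayi bxg) (pref_bact n ax bg).
have : cone m (pref d L) eps.
  by split=> //; rewrite size_pref peps e yyi.
move/hS => [_ [h [hH hmove]]].
have [n hn] : exists n, h (pref eps n) <> pref eps n.
  apply: NNPP => hn; apply: hmove; apply: pref_inj => n.
  rewrite (pref_bact n (G_aut (H_G hH)) beps).
  by apply: NNPP => hn'; apply: hn; exists n.
have : conjg_set y H (y \o h \o yi) by exists h, yi.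
rewrite -c => -[h' [xi [hH' xxi xix eq]]].
split=> //; exists h'; split=> // hfix.
apply: hn; rewrite peps.
have := congr1 (pref ^~ n) hfix; rewrite /= (pref_bact n (G_aut (H_G hH')) bg).
move=> hf.
have := congr1 (fun f => f (x (pref g n))) eq => /=.
rewrite xxi hf => e2.
apply: (can_inj yyi). by rewrite e2 yiy.
Qed.

End Main.

Theorem proposition4p3 (m : nat -> nat) (G H : (seq nat -> seq nat) -> Prop) :
  branch_group m G ->
  subgroup m H G ->
  finitely_many_conjugates H G ->
  bclopen m (Supp m H).
Proof.
move=> [gG lt _] sHG [k [Fc hF]].
split; first by move=> g [].
have Sopen : bopen m (Supp m H).
  move=> g [bg [h [hH hm]]].
  have [j hj] : exists j, bact h g j <> g j.
    apply: NNPP => nj; apply: hm; apply: functional_extensionality => j.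
    apply: NNPP => hj; apply: nj; by exists j.
  exists j.+1 => d [bd pd]; rewrite size_pref in pd.
  split=> //; exists h; split=> // e; apply: hj.
  have := congr1 (nth 0 ^~ j) pd; rewrite /= !nth_pref // => dj.
  have := congr1 (fun f => f j) e; rewrite /bact /= pd dj; done.
split=> //.
move=> g [bg ng].
apply: NNPP => hno.
have step : forall n, exists d N, [/\ bpath m d, pref d n = pref g n, n <= N &
    forall L, N <= L -> ~ E G H (pref g L) (pref d L)].
  move=> n.
  have [d [cd Sd]] : exists d, cone m (pref g n) d /\ Supp m H d.
    apply: NNPP => hn; apply: hno; exists n => d cd; split; first by case: cd.
    by move=> Sd; apply: hn; exists d.
  have [N hN] := Sopen d Sd.
  case: cd => bd pd; rewrite size_pref in pd.
  exists d, (maxn N n); split=> //; first exact: leq_maxr.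
  move=> L hL hE; apply: ng; apply: (transfer gG sHG bg bd hE) => e [be pe].
  have hNL : N <= L by exact: (leq_trans (leq_maxl _ _) hL).
  apply: hN; split=> //; rewrite size_pref.
  rewrite size_pref in pe.
  by rewrite -(take_pref e hNL) pe take_pref.
have claim : forall j, exists L (F : nat -> nat -> nat),
    [/\ F 0 = g, forall i, i <= j -> bpath m (F i) &
      forall i1 i2, i1 < i2 <= j -> ~ E G H (pref (F i1) L) (pref (F i2) L)].
  elim=> [|j [L [F [F0 bF nE]]]].
    exists 0, (fun _ => g); split=> // i1 i2 /andP [h1 h2].
    by case: i2 h1 h2.
  have [d [N [bd pd hN hE]]] := step L.
  exists N, (fun i => if i == j.+1 then d else F i); split=> //.
    move=> i hi; case: eqP => // ne; apply: bF; lia.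
  move=> i1 i2 /andP [h12 h2].
  have ne1 : (i1 == j.+1) = false by apply/eqP; lia.
  rewrite ne1.
  have bFi i : i <= j -> bpath m (F i) := bF i.
  case: (i2 =P j.+1) => [e2|ne2].
    idtac.
    case: i1 h12 ne1 => [|i1] h12 ne1.
      by rewrite F0; apply: hE.
    move=> hE'; apply: (nE 0 i1.+1); first lia.
    have := E_take gG (bFi i1.+1 ltac:(lia)) bd hN hE'.
    rewrite F0 -pd; apply: E_sym.
  idtac.
  move=> hE'; apply: (nE i1 i2); first lia.
  exact: (E_take gG (bFi i1 ltac:(lia)) (bFi i2 ltac:(lia)) hN hE').
have [L [F [F0 bF nE]]] := claim k.
have := @php k (fun j i => exists x, [/\ G x, x (pref (F j) L) = pref g L & conjg_set x H = Fc i]).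
case.
  move=> j hj.
  have [x gx ex] := lt L (pref (F j) L) (pref g L)
     (conj (size_pref _ _) (vert_pref (n:=L) (bF j hj))) (conj (size_pref _ _) (vert_pref (n:=L) bg)).
  have [i hi ci] := hF x gx.
  by exists i => //; exists x.
move=> j1 [j2 [i [h12 [x1 [g1 e1 c1]] [x2 [g2 e2 c2]]]]].
apply: (nE j1 j2 h12).
by exists x1, x2; split=> //; rewrite ?e1 ?e2 ?c1 ?c2.
Qed.
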